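(* A PMD $M^Q(a|x)$ on $\mathcal{H}^Q$ with program set $\mathcal{X}$ and outcome set $\mathcal{A}$ is incompatible (i.e. not simple) if and only if there exists a family $\{\rho^Q_{x,a}: x\in\mathcal{X}, a\in\mathcal{A}\}$ of positive semidefinite operators on $\mathcal{H}^Q$ with $\sum_{x,a}\mathrm{Tr}[\rho^Q_{x,a}]=1$ such that \[\sum_{a,x}\mathrm{Tr}\big[M^Q(a|x)\,\rho^Q_{x,a}\big]>P^{\mathrm{simple}}_{\mathrm{guess}}(\rho^Q_{x,a}),\] where $P^{\mathrm{simple}}_{\mathrm{guess}}(\rho^Q_{x,a})$ is the optimum guessing probability achievable with simple PMDs.
   Context: All Hilbert spaces are finite-dimensional and all alphabets are finite. A PMD on $\mathcal{H}^Q$ with program set $\mathcal{X}$ and outcome set $\mathcal{A}$ is a family $\{M^Q(a|x)\}$ of operators with $M^Q(a|x)\ge0$ and $\sum_a M^Q(a|x)=\mathbb{1}^Q$ for every $x$. It is simple if $M^Q(a|x)=\sum_i p(a|i,x)\tilde M^Q(i)$ for some POVM $\{\tilde M^Q(i)\}$ and conditional distribution $p(a|i,x)$; otherwise it is incompatible. For a guessing game with post-information, i.e. a family $\{\rho^R_{w,z}\}$ of positive semidefinite operators on $\mathcal{H}^R$ with total trace $1$, and a PMD $N^{Q''}(c|v)$, the optimal guessing probability is \[P_{\mathrm{guess}}(N^{Q''}(c|v);\rho^R_{w,z}):=\max\sum_{w,z}\sum_r\sum_{i,v,c}\mu(r)\,q(z|c,w,i,r)\,p(v|w,i,r)\,\mathrm{Tr}\big[\mathcal{E}^{R\to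 Q''}_{i|r}(\rho^R_{w,z})\,N^{Q''}(c|v)\big],\] maximized over probability distributions $\mu(r)$, quantum instruments $\{\mathcal{E}^{R\to Q''}_{i|r}\}_i$ and conditional distributions $p(v|w,i,r)$, $q(z|c,w,i,r)$. $P^{\mathrm{simple}}_{\mathrm{guess}}(\rho^R_{w,z})$ denotes the maximum of $P_{\mathrm{guess}}(N;\rho^R_{w,z})$ over all simple PMDs $N$ (this value is the same for every simple PMD). In the claim, the game is $\{\rho^Q_{x,a}\}$ with post-information $w=x$ and guessed label $z=a$. *)

(* Defs.v *)
From HB Require Import structures.
From mathcomp Require Import all_boot all_order all_algebra.
From mathcomp Require Import classical_sets reals.
From mathcomp.real_closed Require Import complex mxtens.

Set Implicit Arguments.
Unset Strict Implicit.
Unset Printing Implicit Defensive.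

Import Order.TTheory GRing.Theory Num.Theory.
Local Open Scope ring_scope.

Section QuantumDefs.

Variable R : realType.
Local Notation C := (R[i]).

Definition RtoC (r : R) : C := (r%:C)%C.

Definition adj m n (A : 'M[C]_(m, n)) : 'M[C]_(n, m) :=
  map_mx (fun z => z^*) A^T.

(* positive semidefinite operator on C^n: <v, A v> >= 0 for all v
   (in the order of C, "0 <= z" means z is a nonnegative real) *)
Definition psd n (A : 'M[C]_n) : Prop :=
  forall v : 'cV[C]_n, 0 <= (adj v *m A *m v) 0 0.

Definition distr (T : finType) (mu : T -> R) : Prop :=
  (forall t, 0 <= mu t) /\ \sum_t mu t = 1.

Definition cond_distr (Cd Y : finType) (p : Cd -> Y -> R) : Prop :=
  forall c, distr (p c).

(* PMD with program set X and outcome set A on C^n;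
   M x a stands for M(a|x) *)
Definition is_PMD n (X A : finType) (M : X -> A -> 'M[C]_n) : Prop :=
  (forall x a, psd (M x a)) /\ (forall x, \sum_a M x a = 1%:M).

Definition is_POVM n (I : finType) (M : I -> 'M[C]_n) : Prop :=
  (forall i, psd (M i)) /\ \sum_i M i = 1%:M.

Definition simple_PMD n (X A : finType) (M : X -> A -> 'M[C]_n) : Prop :=
  is_PMD M /\
  exists (I : finType) (Mt : I -> 'M[C]_n) (p : (I * X)%type -> A -> R),
    is_POVM Mt /\ cond_distr p /\
    forall x a, M x a = \sum_i RtoC (p (i, x) a) *: Mt i.

Definition incompatible_PMD n (X A : finType) (M : X -> A -> 'M[C]_n) : Prop :=
  is_PMD M /\ ~ simple_PMD M.

(* the (i,j) block (of size m x m) of a (k*m) x (k*m) matrix,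
   w.r.t. the decomposition C^k (x) C^m (index convention of mxtens) *)
Definition blockmx k m (Y : 'M[C]_(k * m)) (i j : 'I_k) : 'M[C]_m :=
  \matrix_(a < m, b < m) Y (mxtens_index (i, a)) (mxtens_index (j, b)).

Definition ampliation k m n (Phi : 'M[C]_m -> 'M[C]_n) (Y : 'M[C]_(k * m))
  : 'M[C]_(k * n) :=
  \sum_(i < k) \sum_(j < k) (delta_mx i j : 'M[C]_k) *t Phi (blockmx Y i j).

Definition is_CP m n (Phi : 'M[C]_m -> 'M[C]_n) : Prop :=
  linear Phi /\
  forall (k : nat) (Y : 'M[C]_(k * m)), psd Y -> psd (ampliation Phi Y).

Definition is_instrument m n (I : finType) (E : I -> 'M[C]_m -> 'M[C]_n)
  : Prop :=
  (forall i, is_CP (E i)) /\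
  forall rho : 'M[C]_m, \tr (\sum_i E i rho) = \tr rho.

Definition is_game m (W Z : finType) (rho : W -> Z -> 'M[C]_m) : Prop :=
  (forall w z, psd (rho w z)) /\ \sum_w \sum_z \tr (rho w z) = 1.

(* success probability of a given strategy (mu, E, p, q) for the PMD
   N (N v c stands for N(c|v)) on the game rho *)
Definition guess_value m n (W Z V Cc : finType)
  (N : V -> Cc -> 'M[C]_n) (rho : W -> Z -> 'M[C]_m)
  (Rr I : finType) (mu : Rr -> R) (E : Rr -> I -> 'M[C]_m -> 'M[C]_n)
  (p : (W * I * Rr)%type -> V -> R) (q : (Cc * W * I * Rr)%type -> Z -> R)
  : C :=
  \sum_w \sum_z \sum_r \sum_i \sum_v \sum_c
     RtoC (mu r * q (c, w, i, r) z * p (w, i, r) v)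
     * \tr (E r i (rho w z) *m N v c).

Definition P_guess m n (W Z V Cc : finType)
  (N : V -> Cc -> 'M[C]_n) (rho : W -> Z -> 'M[C]_m) : R :=
  sup (fun t : R =>
    exists (Rr I : finType) (mu : Rr -> R)
           (E : Rr -> I -> 'M[C]_m -> 'M[C]_n)
           (p : (W * I * Rr)%type -> V -> R)
           (q : (Cc * W * I * Rr)%type -> Z -> R),
      distr mu /\ (forall r, is_instrument (E r)) /\
      cond_distr p /\ cond_distr q /\
      RtoC t = guess_value N rho mu E p q).

Definition P_guess_simple m (W Z : finType) (rho : W -> Z -> 'M[C]_m) : R :=
  sup (fun t : R =>
    exists (n : nat) (V Cc : finType) (N : V -> Cc -> 'M[C]_n),
      simple_PMD N /\ t = P_guess N rho).

End QuantumDefs.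

(* Main.v *)
Require Import Defs.
From HB Require Import structures.
From mathcomp Require Import all_boot all_order all_algebra.
From mathcomp Require Import classical_sets reals.
From mathcomp.real_closed Require Import complex mxtens.
From mathcomp Require Import boolp.
From mathcomp Require Import sesquilinear spectral.
From mathcomp Require Import topology normedtype derive.
From mathcomp Require Import ring lra.
Import Order.TTheory GRing.Theory Num.Theory.
Import numFieldNormedType.Exports.
Local Open Scope ring_scope.

Set Implicit Arguments.
Unset Strict Implicit.
Unset Printing Implicit Defensive.


Section P1.
Variable R : realType.
Local Notation C := (R[i]).

Lemma conjM (x y : C) : (x * y)^* = x^* * y^*. Proof. exact: rmorphM. Qed.
Lemma conjD (x y : C) : (x + y)^* = x^* + y^*. Proof. exact: rmorphD. Qed.
Lemma conjB (x y : C) : (x - y)^* = x^* - y^*. Proof. exact: rmorphB. Qed.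
Lemma conjN (x : C) : (- x)^* = - x^*. Proof. exact: rmorphN. Qed.
Lemma conj_sum (I : finType) (F : I -> C) : (\sum_i F i)^* = \sum_i (F i)^*.
Proof. exact: rmorph_sum. Qed.

Lemma adjE m n (A : 'M[C]_(m, n)) i j : adj A i j = (A j i)^*.
Proof. by rewrite /adj !mxE. Qed.

Lemma adjK m n (A : 'M[C]_(m, n)) : adj (adj A) = A.
Proof. by apply/matrixP => i j; rewrite !adjE conjCK. Qed.

Lemma adjD m n (A B : 'M[C]_(m, n)) : adj (A + B) = adj A + adj B.
Proof. by apply/matrixP => i j; rewrite !adjE !mxE rmorphD. Qed.

Lemma adjZ m n (c : C) (A : 'M[C]_(m, n)) : adj (c *: A) = c^* *: adj A.
Proof. by apply/matrixP => i j; rewrite !adjE !mxE rmorphM. Qed.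

Lemma adjM m n p (A : 'M[C]_(m, n)) (B : 'M[C]_(n, p)) :
  adj (A *m B) = adj B *m adj A.
Proof.
apply/matrixP => i j; rewrite adjE !mxE rmorph_sum; apply: eq_bigr => k _.
by rewrite !adjE rmorphM mulrC.
Qed.

Lemma adj0 m n : adj (0 : 'M[C]_(m, n)) = 0.
Proof. by apply/matrixP => i j; rewrite adjE !mxE conjC0. Qed.

Lemma adj1 n : adj (1%:M : 'M[C]_n) = 1%:M.
Proof. by apply/matrixP => i j; rewrite adjE !mxE eq_sym; case: eqP; rewrite ?conjC1 ?conjC0. Qed.

Lemma adj_sum m n (I : finType) (F : I -> 'M[C]_(m, n)) :
  adj (\sum_i F i) = \sum_i adj (F i).
Proof.
apply/matrixP => i j; rewrite adjE !summxE rmorph_sum; apply: eq_bigr => k _.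
by rewrite adjE.
Qed.

Lemma addmxE' m n (A B : 'M[C]_(m, n)) i j : (A + B) i j = A i j + B i j.
Proof. by rewrite mxE. Qed.
Lemma scalemxE' m n c (A : 'M[C]_(m, n)) i j : (c *: A) i j = c * A i j.
Proof. by rewrite mxE. Qed.

Definition qf n (A : 'M[C]_n) (u w : 'cV[C]_n) : C := (adj u *m A *m w) 0 0.

Lemma qf_sum n (A : 'M[C]_n) u w :
  qf A u w = \sum_i \sum_j (u i 0)^* * A i j * w j 0.
Proof.
rewrite /qf mxE (eq_bigr (fun j => \sum_i (u i 0)^* * A i j * w j 0)).
  by rewrite exchange_big.
move=> j _; rewrite mxE mulr_suml; apply: eq_bigr => i _.
by rewrite adjE.
Qed.

Lemma qfDl n (A : 'M[C]_n) u1 u2 w : qf A (u1 + u2) w = qf A u1 w + qf A u2 w.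
Proof. by rewrite /qf adjD !mulmxDl addmxE'. Qed.
Lemma qfDr n (A : 'M[C]_n) u w1 w2 : qf A u (w1 + w2) = qf A u w1 + qf A u w2.
Proof. by rewrite /qf !mulmxDr addmxE'. Qed.
Lemma qfZl n (A : 'M[C]_n) c u w : qf A (c *: u) w = c^* * qf A u w.
Proof. by rewrite /qf adjZ -!scalemxAl scalemxE'. Qed.
Lemma qfZr n (A : 'M[C]_n) c u w : qf A u (c *: w) = c * qf A u w.
Proof. by rewrite /qf -!scalemxAr scalemxE'. Qed.

Lemma sum_delta (I : finType) (i0 : I) (F : I -> C) :
  \sum_i (i == i0)%:R * F i = F i0.
Proof.
rewrite (bigD1 i0) //= eqxx mul1r big1 ?addr0 // => k /negbTE ->.
by rewrite mul0r.
Qed.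

Lemma sum_delta' (I : finType) (i0 : I) (F : I -> C) :
  \sum_i F i * (i == i0)%:R = F i0.
Proof. by rewrite -(sum_delta i0 F); apply: eq_bigr => i _; rewrite mulrC. Qed.

Lemma qf_delta n (A : 'M[C]_n) i j :
  qf A (delta_mx i 0) (delta_mx j 0) = A i j.
Proof.
rewrite qf_sum (eq_bigr (fun k => (k == i)%:R * (\sum_l A k l * (l == j)%:R))).
  by rewrite sum_delta sum_delta'.
move=> k _; rewrite mulr_sumr; apply: eq_bigr => l _.
rewrite !mxE !eqxx !andbT; case: (k == i); rewrite ?conjC1 ?conjC0 ?mul1r ?mul0r //.
Qed.

Lemma psd_qf_real n (A : 'M[C]_n) v : psd A -> qf A v v \is Num.real.
Proof. by move=> hA; apply: ger0_real; apply: hA. Qed.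

Lemma conj_eq_of a b : (a + b)^* = a + b -> ('i * (a - b))^* = 'i * (a - b) ->
  b = a^* :> C.
Proof.
move=> e1 e2; rewrite conjM conjB conjCi in e2.
rewrite conjD in e1.
have e3 : b^* - a^* = a - b.
  by apply: (mulfI (neq0Ci C)); rewrite -e2; ring.
have e4 : b^* = a.
  have h2 : (2 : C) != 0 by rewrite pnatr_eq0.
  apply: (mulfI h2).
  transitivity ((a^* + b^*) + (b^* - a^*)); first ring.
  by rewrite e1 e3; ring.
by rewrite -e4 conjCK.
Qed.

Lemma psd_herm n (A : 'M[C]_n) : psd A -> adj A = A.
Proof.
move=> hA.
have key : forall u w, qf A w u = (qf A u w)^*.
  move=> u w; apply: conj_eq_of; apply/eqP; rewrite -CrealE.
    have -> : qf A u w + qf A w u =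
       qf A (u + w) (u + w) - qf A u u - qf A w w.
      by rewrite !qfDl !qfDr; ring.
    by rewrite !rpredB // psd_qf_real.
  have -> : 'i * (qf A u w - qf A w u) =
      qf A (u + 'i *: w) (u + 'i *: w) - qf A u u - qf A w w.
    rewrite !qfDl !qfDr !qfZl !qfZr conjCi.
    have hi : forall x : C, - 'i * ('i * x) = x.
      by move=> x; rewrite mulrA mulNr -expr2 sqrCi opprK mul1r.
    by rewrite hi; ring.
  by rewrite !rpredB // psd_qf_real.
apply/matrixP => i j; rewrite adjE -(qf_delta A i j) -(qf_delta A j i).
by rewrite (key (delta_mx j 0)).
Qed.



Local Open Scope sesquilinear_scope.
Lemma adj_tC m n (A : 'M[C]_(m, n)) : adj A = A ^t* .
Proof. by []. Qed.
Local Close Scope sesquilinear_scope.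

Lemma mulmx_entry m n p (M : 'M[C]_(m, n)) (N : 'M[C]_(n, p)) i j :
  (M *m N) i j = (row i M *m col j N) 0 0.
Proof. by rewrite !mxE; apply: eq_bigr => l _; rewrite !mxE. Qed.

Lemma col_adj m n (U : 'M[C]_(m, n)) k : col k (adj U) = adj (row k U).
Proof. by apply/matrixP => i j; rewrite !mxE. Qed.

Lemma conj_psd_diag n (U B : 'M[C]_n) k : psd B -> 0 <= (U *m B *m adj U) k k.
Proof.
move=> hB; rewrite mulmx_entry row_mul col_adj.
by have := hB (adj (row k U)); rewrite adjK.
Qed.

Lemma trace_psd n (P N : 'M[C]_n) : psd P -> psd N -> 0 <= \tr (P *m N).
Proof.
move=> hP hN; have hh := psd_herm hN.
have nN : N \is normalmx by apply/normalmxP; rewrite -!adj_tC hh.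
set U := spectralmx N; set d := spectral_diag N.
have hU : U \is unitarymx := spectral_unitarymx N.
have eN : N = adj U *m diag_mx d *m U.
  by rewrite adj_tC -invmx_unitary //; apply/orthomx_spectralP.
have UU : U *m adj U = 1%:M by apply/unitarymxP.
have ed : forall k, d 0 k = (U *m N *m adj U) k k.
  move=> k; rewrite eN !mulmxA UU mul1mx -!mulmxA UU mulmx1 mxE eqxx.
  by rewrite mulr1n.
rewrite eN !mulmxA mxtrace_mulC !mulmxA /mxtrace; apply: sumr_ge0 => k _.
rewrite mul_mx_diag mxE ed; apply: mulr_ge0; exact: conj_psd_diag.
Qed.


Lemma qfAD n (A B : 'M[C]_n) u w : qf (A + B) u w = qf A u w + qf B u w.
Proof. by rewrite /qf mulmxDr mulmxDl addmxE'. Qed.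
Lemma qfAZ n c (A : 'M[C]_n) u w : qf (c *: A) u w = c * qf A u w.
Proof. by rewrite /qf -scalemxAr -scalemxAl scalemxE'. Qed.
Lemma qfA0 n (u w : 'cV[C]_n) : qf 0 u w = 0.
Proof. by rewrite /qf mulmx0 mul0mx mxE. Qed.
Lemma qfA_sum n (I : finType) (F : I -> 'M[C]_n) u w :
  qf (\sum_i F i) u w = \sum_i qf (F i) u w.
Proof.
apply: (big_ind2 (fun A x => qf A u w = x)) => //; first exact: qfA0.
by move=> A1 x1 A2 x2 <- <-; rewrite qfAD.
Qed.

Lemma psdP n (A : 'M[C]_n) : psd A <-> forall v, 0 <= qf A v v.
Proof. by []. Qed.

Lemma psd0 n : psd (0 : 'M[C]_n).
Proof. by move=> v; have := qfA0 v v; rewrite /qf => ->. Qed.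

Lemma psdD n (A B : 'M[C]_n) : psd A -> psd B -> psd (A + B).
Proof. by move=> hA hB v; have := qfAD A B v v; rewrite /qf => ->; apply: addr_ge0. Qed.

Lemma psdZ n c (A : 'M[C]_n) : 0 <= c -> psd A -> psd (c *: A).
Proof. by move=> hc hA v; have := qfAZ c A v v; rewrite /qf => ->; apply: mulr_ge0. Qed.

Lemma psd_sum n (I : finType) (P : pred I) (F : I -> 'M[C]_n) :
  (forall i, P i -> psd (F i)) -> psd (\sum_(i | P i) F i).
Proof.
move=> h; apply: (big_ind (fun A => psd A)) => //; [exact: psd0 | exact: psdD].
Qed.

Lemma psd_rank1 n (v : 'cV[C]_n) : psd (v *m adj v).
Proof.
move=> u; rewrite mulmxA -mulmxA mxE big_ord1.
have -> : adj u *m v = adj (adj v *m u) by rewrite adjM adjK.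
by rewrite adjE mulrC mul_conjC_ge0.
Qed.

Lemma psd1 n : psd (1%:M : 'M[C]_n).
Proof.
move=> v; rewrite mulmx1 mxE; apply: sumr_ge0 => i _.
by rewrite adjE mulrC mul_conjC_ge0.
Qed.

Lemma tr_psd_ge0 n (P : 'M[C]_n) : psd P -> 0 <= \tr P.
Proof. by move=> hP; have := trace_psd hP (@psd1 n); rewrite mulmx1. Qed.

Definition fidx m (p : 'I_(1 * m)) : 'I_m := (mxtens_unindex p).2.
Definition gidx m (a : 'I_m) : 'I_(1 * m) := mxtens_index (ord0, a).

Lemma fgK m : cancel (@gidx m) (@fidx m).
Proof. by move=> a; rewrite /fidx /gidx mxtens_indexK. Qed.
Lemma gfK m : cancel (@fidx m) (@gidx m).
Proof.
move=> p; rewrite /fidx /gidx; case: (mxtens_indexP p) => i a.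
by rewrite mxtens_indexK /=; rewrite (ord1 i).
Qed.

Lemma sum_idx m (F : 'I_(1 * m) -> C) : \sum_p F p = \sum_a F (gidx a).
Proof. by rewrite (reindex (@gidx m)) //; exists (@fidx m) => x _; [exact: fgK | exact: gfK]. Qed.

Lemma psd_reindex m (Y : 'M[C]_(1 * m)) (B : 'M[C]_m) :
  (forall p q, Y p q = B (fidx p) (fidx q)) -> (psd Y <-> psd B).
Proof.
move=> hY; split=> h v.
  have := h (\col_p v (fidx p) 0); rewrite -/(qf _ _ _) -/(qf _ _ _) !qf_sum sum_idx.
  congr (_ <= _); apply: eq_bigr => a _; rewrite sum_idx; apply: eq_bigr => b _.
  by rewrite hY !mxE !fgK.
have := h (\col_a v (gidx a) 0); rewrite -/(qf _ _ _) -/(qf _ _ _) !qf_sum sum_idx.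
congr (_ <= _); apply: eq_bigr => a _; rewrite sum_idx; apply: eq_bigr => b _.
by rewrite hY !mxE !fgK.
Qed.

Lemma CP_pos m n (Phi : 'M[C]_m -> 'M[C]_n) (rho : 'M[C]_m) :
  is_CP Phi -> psd rho -> psd (Phi rho).
Proof.
move=> [_ hcp] hrho.
pose Y : 'M[C]_(1 * m) := \matrix_(p, q) rho (fidx p) (fidx q).
have hY : psd Y by apply/(psd_reindex (B := rho)) => // p q; rewrite mxE.
have := hcp 1%N Y hY; rewrite /ampliation !big_ord1.
have -> : blockmx Y 0 0 = rho.
  by apply/matrixP => a b; rewrite !mxE -/(gidx a) -/(gidx b) !fgK.
move/psd_reindex; apply => p q; rewrite !mxE.
by rewrite !ord1 eqxx mul1r.
Qed.

Lemma natr_andb (x y : bool) : ((x && y)%:R : C) = x%:R * y%:R.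
Proof. by case: x; case: y; rewrite ?mul1r ?mul0r. Qed.

Lemma ampliation_id k m (Y : 'M[C]_(k * m)) : ampliation id Y = Y.
Proof.
apply/matrixP => p q; rewrite summxE.
case: (mxtens_indexP p) => i a; case: (mxtens_indexP q) => j b.
rewrite (eq_bigr (fun i' => (i' == i)%:R * \sum_j' (j' == j)%:R * blockmx Y i' j' a b)).
  rewrite sum_delta sum_delta mxE //.
move=> i' _; rewrite summxE mulr_sumr; apply: eq_bigr => j' _.
by rewrite tensmxE !mxE natr_andb mulrA (eq_sym i) (eq_sym j).
Qed.


Lemma RtoCD (x y : R) : RtoC (x + y) = RtoC x + RtoC y.
Proof. rewrite /RtoC. exact: rmorphD. Qed.
Lemma RtoCM (x y : R) : RtoC (x * y) = RtoC x * RtoC y.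
Proof. rewrite /RtoC. exact: rmorphM. Qed.
Lemma RtoC_sum (I : finType) (F : I -> R) : RtoC (\sum_i F i) = \sum_i RtoC (F i).
Proof. rewrite /RtoC. exact: rmorph_sum. Qed.
Lemma RtoC_ge0 (x : R) : (0 <= RtoC x) = (0 <= x).
Proof. by rewrite /RtoC ler0c. Qed.
Lemma RtoC_le (x y : R) : (RtoC x <= RtoC y) = (x <= y).
Proof. by rewrite /RtoC lecR. Qed.
Lemma RtoC_lt (x y : R) : (RtoC x < RtoC y) = (x < y).
Proof. by rewrite /RtoC ltcR. Qed.
Lemma RtoC1 : RtoC (1 : R) = 1. Proof. by []. Qed.
Lemma RtoC0 : RtoC (0 : R) = 0. Proof. by []. Qed.
Lemma tr_sum n (I : finType) (F : I -> 'M[R[i]]_n) : \tr (\sum_i F i) = \sum_i \tr (F i).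
Proof. exact: raddf_sum. Qed.
End P1.


Section P2.
Variable R : realType.
Local Notation C := (R[i]).

Section Lin.
Variables (m n : nat) (E : 'M[C]_m -> 'M[C]_n).
Hypothesis hE : linear E.

Lemma linE0 : E 0 = 0.
Proof.
have := hE (-1) 0 0; rewrite scaler0 addr0 => h.
by rewrite -[E 0]/(E 0) {1}h scaleN1r addNr.
Qed.
Lemma linED u v : E (u + v) = E u + E v.
Proof. by have := hE 1 u v; rewrite !scale1r. Qed.
Lemma linEZ c u : E (c *: u) = c *: E u.
Proof. by have := hE c u 0; rewrite !addr0 linE0 addr0. Qed.
Lemma linE_sum (I : finType) (F : I -> 'M[C]_m) : E (\sum_i F i) = \sum_i E (F i).
Proof.
apply: (big_ind2 (fun x y => E x = y)) => //; first exact: linE0.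
by move=> x1 y1 x2 y2 <- <-; rewrite linED.
Qed.

Definition Ead (Y : 'M[C]_n) : 'M[C]_m :=
  \matrix_(a, b) \tr (E (delta_mx b a) *m Y).

Lemma Ead_tr rho Y : \tr (E rho *m Y) = \tr (rho *m Ead Y).
Proof.
have -> : E rho = \sum_a \sum_b rho a b *: E (delta_mx a b).
  rewrite {1}(matrix_sum_delta rho) linE_sum; apply: eq_bigr => a _.
  by rewrite linE_sum; apply: eq_bigr => b _; rewrite linEZ.
transitivity (\sum_a \sum_b rho a b * \tr (E (delta_mx a b) *m Y)).
  rewrite mulmx_suml tr_sum; apply: eq_bigr => a _.
  rewrite mulmx_suml tr_sum; apply: eq_bigr => b _.
  by rewrite -scalemxAl mxtraceZ.
rewrite /mxtrace; apply: eq_bigr => a _; rewrite mxE; apply: eq_bigr => b _.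
by rewrite mxE.
Qed.

Lemma EadD Y Z : Ead (Y + Z) = Ead Y + Ead Z.
Proof. by apply/matrixP => a b; rewrite !mxE mulmxDr mxtraceD. Qed.
Lemma EadZ c Y : Ead (c *: Y) = c *: Ead Y.
Proof. by apply/matrixP => a b; rewrite !mxE -scalemxAr mxtraceZ. Qed.
Lemma Ead0 : Ead 0 = 0.
Proof. by apply/matrixP => a b; rewrite !mxE mulmx0 mxtrace0. Qed.
Lemma Ead_sum (I : finType) (F : I -> 'M[C]_n) : Ead (\sum_i F i) = \sum_i Ead (F i).
Proof.
apply: (big_ind2 (fun x y => Ead x = y)) => //; first exact: Ead0.
by move=> x1 y1 x2 y2 <- <-; rewrite EadD.
Qed.

Lemma tr1 (M : 'M[C]_1) : \tr M = M 0 0.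
Proof. by rewrite /mxtrace big_ord1. Qed.

Lemma Ead_psd Y : is_CP E -> psd Y -> psd (Ead Y).
Proof.
move=> hcp hY v; rewrite -tr1 mxtrace_mulC mulmxA -Ead_tr.
apply: trace_psd => //; apply: CP_pos => //; exact: psd_rank1.
Qed.
End Lin.


Lemma Ead_instr_sum m n (I : finType) (E : I -> 'M[C]_m -> 'M[C]_n) :
  is_instrument E -> \sum_i Ead (E i) 1%:M = 1%:M.
Proof.
move=> [hcp htp]; apply/matrixP => a b; rewrite summxE.
rewrite (eq_bigr (fun i => \tr (E i (delta_mx b a)))); last first.
  by move=> i _; rewrite mxE mulmx1.
rewrite -tr_sum htp /mxtrace !mxE.
rewrite (eq_bigr (fun i => (i == b)%:R * (i == a)%:R)); last first.
  by move=> i _; rewrite mxE natr_andb.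
by rewrite sum_delta eq_sym.
Qed.

Lemma sum_triple (A1 A2 A3 : finType) (G : (A1 * A2 * A3)%type -> C) :
  \sum_t G t = \sum_a \sum_b \sum_c G (a, b, c).
Proof.
transitivity (\sum_(t : (A1 * A2) * A3) G (t.1.1, t.1.2, t.2)).
  by apply: eq_bigr => [[[a b] c]] _.
rewrite -(pair_bigA _ (fun ab c => G (ab.1, ab.2, c))).
by rewrite -(pair_bigA _ (fun a b => \sum_c G (a, b, c))).
Qed.

Lemma sum_tripleM n (A1 A2 A3 : finType) (G : (A1 * A2 * A3)%type -> 'M[C]_n) :
  \sum_t G t = \sum_a \sum_b \sum_c G (a, b, c).
Proof.
transitivity (\sum_(t : (A1 * A2) * A3) G (t.1.1, t.1.2, t.2)).
  by apply: eq_bigr => [[[a b] c]] _.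
rewrite -(pair_bigA _ (fun ab c => G (ab.1, ab.2, c))).
by rewrite -(pair_bigA _ (fun a b => \sum_c G (a, b, c))).
Qed.

Lemma is_PMD_of n (X A I : finType) (Mt : I -> 'M[C]_n) (p : (I * X)%type -> A -> R)
  (M : X -> A -> 'M[C]_n) :
  is_POVM Mt -> cond_distr p ->
  (forall x a, M x a = \sum_i RtoC (p (i, x) a) *: Mt i) -> is_PMD M.
Proof.
move=> [hMt1 hMt2] hp hM; split.
  move=> x a; rewrite hM; apply: psd_sum => i _; apply: psdZ => //.
  by rewrite RtoC_ge0; case: (hp (i, x)).
move=> x; rewrite (eq_bigr _ (fun a _ => hM x a)) exchange_big /= -hMt2.
apply: eq_bigr => i _; rewrite -scaler_suml -RtoC_sum.
by case: (hp (i, x)) => _ ->; rewrite RtoC1 scale1r.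
Qed.

Lemma simple_of n (X A I : finType) (Mt : I -> 'M[C]_n) (p : (I * X)%type -> A -> R)
  (M : X -> A -> 'M[C]_n) :
  is_POVM Mt -> cond_distr p ->
  (forall x a, M x a = \sum_i RtoC (p (i, x) a) *: Mt i) -> simple_PMD M.
Proof.
move=> h1 h2 h3; split; first exact: (is_PMD_of h1 h2 h3).
by exists I, Mt, p.
Qed.

Lemma tr_lin n (I : finType) (rho : 'M[C]_n) (F : I -> 'M[C]_n) :
  \tr (rho *m \sum_k F k) = \sum_k \tr (rho *m F k).
Proof. by rewrite mulmx_sumr tr_sum. Qed.


Lemma strategy_simple n n' (W Z V Cc Rr I : finType)
  (N : V -> Cc -> 'M[C]_n') (rho : W -> Z -> 'M[C]_n) (mu : Rr -> R)
  (E : Rr -> I -> 'M[C]_n -> 'M[C]_n')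
  (p : (W * I * Rr)%type -> V -> R) (q : (Cc * W * I * Rr)%type -> Z -> R) :
  simple_PMD N -> distr mu -> (forall r, is_instrument (E r)) ->
  cond_distr p -> cond_distr q ->
  exists F : W -> Z -> 'M[C]_n, simple_PMD F /\
    guess_value N rho mu E p q = \sum_w \sum_z \tr (F w z *m rho w z).
Proof.
move=> [hN [J [Nt [pi [[hNt1 hNt2] [hpi hNe]]]]]] [hmu1 hmu2] hE hp hq.
have hlin : forall r i, linear (E r i).
  by move=> r i; case: (hE r) => /(_ i) [].
have hcp : forall r i, is_CP (E r i).
  by move=> r i; case: (hE r) => /(_ i).
pose EA r i := Ead (E r i).
pose F w z := \sum_r \sum_i \sum_v \sum_c
   RtoC (mu r * q (c, w, i, r) z * p (w, i, r) v) *: EA r i (N v c).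
exists F; split; last first.
  rewrite /guess_value; apply: eq_bigr => w _; apply: eq_bigr => z _.
  rewrite mxtrace_mulC tr_lin; apply: eq_bigr => r _.
  rewrite tr_lin; apply: eq_bigr => i _.
  rewrite tr_lin; apply: eq_bigr => v _.
  rewrite tr_lin; apply: eq_bigr => c _.
  by rewrite -scalemxAr mxtraceZ /EA -Ead_tr.
pose Mt' (t : (Rr * I * J)%type) := RtoC (mu t.1.1) *: EA t.1.1 t.1.2 (Nt t.2).
pose p' (tw : (Rr * I * J * W)%type) (z : Z) :=
  \sum_v \sum_c p (tw.2, tw.1.1.2, tw.1.1.1) v * pi (tw.1.2, v) c *
                 q (c, tw.2, tw.1.1.2, tw.1.1.1) z.
apply: (@simple_of n W Z _ Mt' p').
- split.
    move=> [[r i] j]; apply: psdZ; first by rewrite RtoC_ge0.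
    by apply: Ead_psd => //; apply: hNt1.
  rewrite sum_tripleM /Mt' /=.
  rewrite (eq_bigr (fun r => RtoC (mu r) *: 1%:M)); last first.
    move=> r _; rewrite -(Ead_instr_sum (hE r)) scaler_sumr; apply: eq_bigr => i _.
    by rewrite -hNt2 /EA Ead_sum // scaler_sumr.
  by rewrite -scaler_suml -RtoC_sum hmu2 RtoC1 scale1r.
- move=> [[[r i] j] w]; rewrite /p' /=; split.
    move=> z; apply: sumr_ge0 => v _; apply: sumr_ge0 => c _.
    apply: mulr_ge0; first apply: mulr_ge0.
    + by case: (hp (w, i, r)).
    + by case: (hpi (j, v)).
    + by case: (hq (c, w, i, r)).
  rewrite exchange_big /=.
  rewrite -[RHS](proj2 (hp (w, i, r))); apply: eq_bigr => v _.
  rewrite exchange_big /=.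
  rewrite (eq_bigr (fun c => p (w, i, r) v * pi (j, v) c)); last first.
    by move=> c _; rewrite -mulr_sumr (proj2 (hq (c, w, i, r))) mulr1.
  by rewrite -mulr_sumr (proj2 (hpi (j, v))) mulr1.
- move=> w z; rewrite sum_tripleM /F /Mt' /p' /=; apply: eq_bigr => r _.
  apply: eq_bigr => i _.
  rewrite (eq_bigr (fun v => \sum_j \sum_c
     RtoC (mu r * q (c, w, i, r) z * p (w, i, r) v * pi (j, v) c) *: EA r i (Nt j))); last first.
    move=> v _; rewrite [RHS]exchange_big /=; apply: eq_bigr => c _.
    rewrite hNe /EA Ead_sum // scaler_sumr.
    by apply: eq_bigr => j _; rewrite EadZ // scalerA -RtoCM.
  rewrite exchange_big /=; apply: eq_bigr => j _.
  rewrite RtoC_sum scaler_suml; apply: eq_bigr => v _.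
  rewrite RtoC_sum scaler_suml; apply: eq_bigr => c _.
  by rewrite scalerA -RtoCM; congr (RtoC _ *: _); ring.
Qed.


Lemma val_bounds n (W Z : finType) (F : W -> Z -> 'M[C]_n) (rho : W -> Z -> 'M[C]_n) :
  is_PMD F -> is_game rho ->
  0 <= \sum_w \sum_z \tr (F w z *m rho w z) /\
  \sum_w \sum_z \tr (F w z *m rho w z) <= 1.
Proof.
move=> [hF1 hF2] [hr1 hr2]; split.
  by apply: sumr_ge0 => w _; apply: sumr_ge0 => z _; apply: trace_psd.
rewrite -hr2; apply: ler_sum => w _; apply: ler_sum => z _.
have -> : \tr (rho w z) = \sum_z' \tr (F w z' *m rho w z).
  by rewrite -tr_sum -mulmx_suml hF2 mul1mx.
rewrite (bigD1 z) //= lerDl; apply: sumr_ge0 => z' _; exact: trace_psd.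
Qed.

Lemma sum_deltaR (T : finType) (t0 : T) (F : T -> R) :
  \sum_t (t == t0)%:R * F t = F t0.
Proof.
rewrite (bigD1 t0) //= eqxx mul1r big1 ?addr0 // => k /negbTE ->.
by rewrite mul0r.
Qed.

Lemma distr_delta (T : finType) (t0 : T) : distr (fun t : T => ((t == t0)%:R : R)).
Proof.
split; first by move=> t; apply: ler0n.
by have := sum_deltaR t0 (fun _ => 1); under eq_bigr do rewrite mulr1.
Qed.

Lemma id_instrument n : is_instrument (fun (_ : 'I_1) (rho : 'M[C]_n) => rho).
Proof.
split; last by move=> rho; rewrite big_ord1.
move=> _; split; first by [].
by move=> k Y hY; rewrite ampliation_id.
Qed.

Lemma RtoC_nat k : RtoC (k%:R : R) = k%:R.
Proof. by rewrite /RtoC rmorph_nat. Qed.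

Lemma trivial_strategy n (W Z : finType) (M : W -> Z -> 'M[C]_n) (rho : W -> Z -> 'M[C]_n) :
  exists (mu : 'I_1 -> R) (E : 'I_1 -> 'I_1 -> 'M[C]_n -> 'M[C]_n)
    (p : (W * 'I_1 * 'I_1)%type -> W -> R) (q : (Z * W * 'I_1 * 'I_1)%type -> Z -> R),
    distr mu /\ (forall r, is_instrument (E r)) /\ cond_distr p /\ cond_distr q /\
    guess_value M rho mu E p q = \sum_w \sum_z \tr (M w z *m rho w z).
Proof.
exists (fun _ => 1), (fun _ _ rho => rho), (fun t v => (v == t.1.1)%:R),
  (fun t z => (z == t.1.1.1)%:R).
split.
  split; first by move=> _; apply: ler01.
  by rewrite big_ord1.
split; first by move=> r; exact: id_instrument.
split; first by move=> t; exact: distr_delta.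
split; first by move=> t; exact: distr_delta.
rewrite /guess_value; apply: eq_bigr => w _; apply: eq_bigr => z _.
rewrite !big_ord1 /= mxtrace_mulC.
rewrite (eq_bigr (fun v => (v == w)%:R * \sum_c (c == z)%:R * \tr (rho w z *m M v c))).
  by rewrite sum_delta sum_delta.
move=> v _; rewrite mulr_sumr; apply: eq_bigr => c _.
by rewrite mul1r RtoCM !RtoC_nat mulrA (eq_sym z) [X in X * _ = _]mulrC.
Qed.

End P2.


Section P3.
Variable R : realType.
Local Notation C := (R[i]).
Variables (n : nat) (X A : finType).
Local Notation Lam := {ffun X -> A}.

Definition Lmap (G : Lam -> 'M[C]_n) : X -> A -> 'M[C]_n :=
  fun x a => \sum_(l : Lam | l x == a) G l.

Lemma joint_simple (G : Lam -> 'M[C]_n) : is_POVM G -> simple_PMD (Lmap G).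
Proof.
move=> hG; apply: (@simple_of R n X A Lam G (fun la a => ((a == la.1 la.2)%:R : R))) => //.
  by move=> [l x]; apply: distr_delta.
move=> x a; rewrite /Lmap big_mkcond /=; apply: eq_bigr => l _.
by rewrite RtoC_nat eq_sym; case: (a == l x); rewrite ?scale1r ?scale0r.
Qed.

Lemma simple_joint (M : X -> A -> 'M[C]_n) : simple_PMD M ->
  exists G : Lam -> 'M[C]_n, is_POVM G /\ M = Lmap G.
Proof.
move=> [hM [I [Mt [p [[hMt1 hMt2] [hp hMe]]]]]].
pose G (l : Lam) := \sum_i RtoC (\prod_x p (i, x) (l x)) *: Mt i.
have key : forall i x a, \sum_(l : Lam | l x == a) \prod_x' p (i, x') (l x') = p (i, x) a.
  move=> i x a.
  pose f x' b := if x' == x then (b == a)%:R * p (i, x') b else p (i, x') b.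
  transitivity (\sum_(l : Lam) \prod_x' f x' (l x')).
    rewrite big_mkcond /=; apply: eq_bigr => l _.
    rewrite [RHS](bigD1 x) //=.
    have -> : \prod_(x' | x' != x) f x' (l x') = \prod_(x' | x' != x) p (i, x') (l x').
      by apply: eq_bigr => x' /negbTE h; rewrite /f h.
    have -> : f x (l x) = (l x == a)%:R * p (i, x) (l x) by rewrite /f eqxx.
    rewrite [in LHS](bigD1 x) //=.
    by case: (l x == a); rewrite ?mul1r ?mul0r.
  rewrite -bigA_distr_bigA /= (bigD1 x) //= /f eqxx.
  rewrite (eq_bigr (fun b => (b == a)%:R * p (i, x) b)); last by [].
  rewrite sum_deltaR big1 ?mulr1 // => x' /negbTE ->.
  by case: (hp (i, x')).
exists G; split; last first.
  apply/funext => x; apply/funext => a; rewrite hMe /Lmap /G.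
  rewrite exchange_big /=; apply: eq_bigr => i _.
  by rewrite -scaler_suml -key /RtoC rmorph_sum.
split.
  move=> l; apply: psd_sum => i _; apply: psdZ => //; rewrite RtoC_ge0.
  by apply: prodr_ge0 => x _; case: (hp (i, x)).
rewrite /G exchange_big /= -hMt2; apply: eq_bigr => i _.
rewrite -scaler_suml -RtoC_sum -(@bigA_distr_bigA R 0 1 *%R +%R X A (fun x b => p (i, x) b)) /= big1 ?RtoC1 ?scale1r //.
by move=> x _; case: (hp (i, x)).
Qed.

End P3.

Local Open Scope classical_set_scope.


Section Cont.
Variable R : realType.
Variable N : nat.

Lemma cont_sum (I : finType) (F : I -> 'rV[R]_N -> R) :
  (forall i, continuous (F i)) -> continuous (fun g => \sum_i F i g).
Proof.
move=> hF.
have : forall s : seq I, continuous (fun g => \sum_(i <- s) F i g).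
  elim=> [|i s IH].
    by under [fun g => _]funext => g do rewrite big_nil; exact: cst_continuous.
  under [fun g => _]funext => g do rewrite big_cons.
  by move=> x; apply: continuousD; [apply: hF | apply: IH].
by apply.
Qed.

Lemma linR_cont (f : 'rV[R]_N -> R) :
  (forall a g h, f (a *: g + h) = a * f g + f h) -> continuous f.
Proof.
move=> hf.
have f0 : f 0 = 0.
  by have := hf (-1) 0 0; rewrite scaler0 addr0 mulN1r addNr.
have fD : forall g h, f (g + h) = f g + f h.
  by move=> g h; have := hf 1 g h; rewrite scale1r mul1r.
have fZ : forall a g, f (a *: g) = a * f g.
  by move=> a g; have := hf a g 0; rewrite !addr0 f0 addr0.
have fS : forall (I : finType) (F : I -> 'rV[R]_N), f (\sum_i F i) = \sum_i f (F i).
  move=> I F; apply: (big_ind2 (fun x y => f x = y)) => //.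
  by move=> x1 y1 x2 y2 <- <-; rewrite fD.
have -> : f = fun g => \sum_k g 0 k * f (delta_mx 0 k).
  apply/funext => g; rewrite {1}(matrix_sum_delta g) big_ord1 fS.
  by apply: eq_bigr => k _; rewrite fZ.
apply: cont_sum => k x; apply: continuousM; last exact: cst_continuous.
exact: coord_continuous.
Qed.

End Cont.

Section P4.
Variable R : realType.
Local Notation C := (R[i]).
Variables (n : nat) (X A : finType).
Local Notation Lam := {ffun X -> A}.
Local Notation J := (Lam * 'I_n * 'I_n * bool)%type.
Local Notation Nd := #|{: J}|.

Definition decode (g : 'rV[R]_Nd) : Lam -> 'M[C]_n := fun l =>
  \matrix_(i, j) Complex (g 0 (enum_rank (l, i, j, false))) (g 0 (enum_rank (l, i, j, true))).

Definition encode (G : Lam -> 'M[C]_n) : 'rV[R]_Nd :=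
  \row_k (let: (l, i, j, b) := enum_val k in
          if b then complex.Im (G l i j) else complex.Re (G l i j)).

Lemma decodeK G : decode (encode G) = G.
Proof.
apply/funext => l; apply/matrixP => i j; rewrite !mxE !enum_rankK /=.
by case: (G l i j).
Qed.

Lemma RtoC_mulE (a : R) (z : C) : RtoC a * z = Complex (a * complex.Re z) (a * complex.Im z).
Proof. by case: z => x y; rewrite /RtoC; simpc. Qed.

Lemma decode_lin a g h l : decode (a *: g + h) l = RtoC a *: decode g l + decode h l.
Proof.
apply/matrixP => i j; rewrite !mxE RtoC_mulE /=.
by simpc.
Qed.


Lemma ReD (x y : C) : complex.Re (x + y) = complex.Re x + complex.Re y.
Proof. by case: x; case: y. Qed.
Lemma ImD (x y : C) : complex.Im (x + y) = complex.Im x + complex.Im y.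
Proof. by case: x; case: y. Qed.
Lemma ReRZ a (z : C) : complex.Re (RtoC a * z) = a * complex.Re z.
Proof. by rewrite RtoC_mulE. Qed.
Lemma ImRZ a (z : C) : complex.Im (RtoC a * z) = a * complex.Im z.
Proof. by rewrite RtoC_mulE. Qed.
Lemma Re_sum (I : finType) (F : I -> C) : complex.Re (\sum_i F i) = \sum_i complex.Re (F i).
Proof. by apply: (big_ind2 (fun x y => complex.Re x = y)) => // x1 y1 x2 y2 <- <-; rewrite ReD. Qed.
Lemma Im_sum (I : finType) (F : I -> C) : complex.Im (\sum_i F i) = \sum_i complex.Im (F i).
Proof. by apply: (big_ind2 (fun x y => complex.Im x = y)) => // x1 y1 x2 y2 <- <-; rewrite ImD. Qed.

Lemma decode_linF a g h : decode (a *: g + h) = fun l => RtoC a *: decode g l + decode h l.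
Proof. by apply/funext => l; rewrite decode_lin. Qed.

Lemma dec_cont (Phi : (Lam -> 'M[C]_n) -> C) :
  (forall a G H, Phi (fun l => RtoC a *: G l + H l) = RtoC a * Phi G + Phi H) ->
  continuous (fun g => complex.Re (Phi (decode g))) /\
  continuous (fun g => complex.Im (Phi (decode g))).
Proof.
move=> hP; split; apply: linR_cont => a g h; rewrite decode_linF hP.
  by rewrite ReD ReRZ.
by rewrite ImD ImRZ.
Qed.

Lemma closed_pre_eq (f : 'rV[R]_Nd -> R) c : continuous f -> closed [set g | f g = c].
Proof.
move=> hf; have := @preimage_closed _ _ f [set x | x = c]; apply => [x _|].
  exact: hf.
exact: closed_eq.
Qed.
Lemma closed_pre_ge (f : 'rV[R]_Nd -> R) c : continuous f -> closed [set g | c <= f g].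
Proof.
move=> hf; have := @preimage_closed _ _ f [set x | c <= x]; apply => [x _|].
  exact: hf.
exact: closed_ge.
Qed.

Definition Kset := [set g : 'rV[R]_Nd | is_POVM (decode g)].

Lemma complex_eqP (z w : C) : z = w <-> complex.Re z = complex.Re w /\ complex.Im z = complex.Im w.
Proof. by case: z; case: w => a b c d /=; split => [[-> ->]|[-> ->]]. Qed.

Lemma ge0_ReIm (z : C) : 0 <= z <-> complex.Im z = 0 /\ 0 <= complex.Re z.
Proof. by rewrite lecE /=; split => [/andP[/eqP -> ->]|[-> ->]]; rewrite ?eqxx. Qed.

Lemma closed_Kset : closed Kset.
Proof.
pose S1 (lv : Lam * 'cV[C]_n) : set 'rV[R]_Nd :=
  [set g | complex.Im (qf (decode g lv.1) lv.2 lv.2) = 0] `&`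
  [set g | 0 <= complex.Re (qf (decode g lv.1) lv.2 lv.2)].
pose S2 (ij : 'I_n * 'I_n) : set 'rV[R]_Nd :=
  [set g | complex.Re ((\sum_l decode g l) ij.1 ij.2) = complex.Re ((1%:M : 'M[C]_n) ij.1 ij.2)] `&`
  [set g | complex.Im ((\sum_l decode g l) ij.1 ij.2) = complex.Im ((1%:M : 'M[C]_n) ij.1 ij.2)].
have -> : Kset = (\bigcap_(lv in [set: Lam * 'cV[C]_n]) S1 lv) `&`
                 (\bigcap_(ij in [set: 'I_n * 'I_n]) S2 ij).
  rewrite predeqE => g; split.
    move=> [h1 h2]; split.
      move=> [l v] _; apply/ge0_ReIm; exact: h1.
    move=> [i j] _; apply/complex_eqP; by rewrite h2.
  move=> [h1 h2]; split.
    by move=> l v; apply/ge0_ReIm; exact: (h1 (l, v)).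
  apply/matrixP => i j; apply/complex_eqP; exact: (h2 (i, j)).
apply: closedI; apply: closed_bigI.
  move=> [l v] _; rewrite /S1 /=.
  have hl : forall a (G H : Lam -> 'M[C]_n),
      qf (RtoC a *: G l + H l) v v = RtoC a * qf (G l) v v + qf (H l) v v.
    by move=> a G H; rewrite qfAD qfAZ.
  have [c1 c2] := @dec_cont (fun G => qf (G l) v v) hl.
  apply: closedI; [exact: closed_pre_eq | exact: closed_pre_ge].
move=> [i j] _; rewrite /S2 /=.
have hl : forall a (G H : Lam -> 'M[C]_n),
    (\sum_l (RtoC a *: G l + H l)) i j = RtoC a * (\sum_l G l) i j + (\sum_l H l) i j.
  move=> a G H; rewrite !summxE mulr_sumr -big_split /=; apply: eq_bigr => l _.
  by rewrite !mxE.
have [c1 c2] := @dec_cont (fun G => (\sum_l G l) i j) hl.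
apply: closedI; exact: closed_pre_eq.
Qed.


Lemma psd_diag_ge0 m (P : 'M[C]_m) i : psd P -> 0 <= P i i.
Proof. by move=> hP; rewrite -qf_delta; apply: hP. Qed.

Lemma psd_offdiag m (P : 'M[C]_m) i j : psd P -> `|P i j| *+ 2 <= P i i + P j j.
Proof.
move=> hP; have hh := psd_herm hP.
have eji : P j i = (P i j)^* by rewrite -[in LHS]hh adjE.
set z := P i j; set Nz := `|z|.
have hzz : z * z^* = Nz ^+ 2 by rewrite /Nz normCK.
have := hP (Nz *: delta_mx i 0 + (- z^*) *: delta_mx j 0).
rewrite -/(qf _ _ _) !qfDl !qfDr !qfZl !qfZr !qf_delta eji -/z.
rewrite conj_normC conjN conjCK.
have -> : Nz * (Nz * P i i) + Nz * (- z^* * z) + (- z * (Nz * z^*) + - z * (- z^* * P j j))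
   = Nz ^+ 2 * (P i i + P j j - Nz *+ 2).
  transitivity (Nz ^+ 2 * P i i - Nz * (z * z^*) - Nz * (z * z^*) + (z * z^*) * P j j).
    by ring.
  by rewrite hzz; ring.
have [z0|zn0] := eqVneq Nz 0.
  move=> _; rewrite z0 mul0rn; apply: addr_ge0; exact: psd_diag_ge0.
have Nz2 : 0 < Nz ^+ 2 by rewrite exprn_gt0 // lt_def zn0 /Nz normr_ge0.
by rewrite pmulr_rge0 // subr_ge0.
Qed.

Lemma povm_entry_bound (G : Lam -> 'M[C]_n) l i j : is_POVM G -> `|G l i j| <= 1.
Proof.
move=> [hG1 hG2].
have hd : forall k, G l k k <= 1.
  move=> k; have : (\sum_l' G l') k k = 1 by rewrite hG2 mxE eqxx.
  rewrite summxE (bigD1 l) //= => h; rewrite -h lerDl.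
  by apply: sumr_ge0 => l' _; apply: psd_diag_ge0.
have := psd_offdiag i j (hG1 l) => h.
have h2 : `|G l i j| *+ 2 <= 1 *+ 2 by apply: (le_trans h); rewrite mulr2n lerD.
by rewrite lerMn2r in h2.
Qed.

Lemma Re_bound (z : C) : `|z| <= 1 -> `|complex.Re z| <= 1.
Proof.
rewrite normc_def -[1 : C]/((1 : R)%:C)%C lecR => h; apply: le_trans h.
case: z => a b /=; rewrite -sqrtr_sqr ler_sqrt ?lerDl ?sqr_ge0 //; apply: addr_ge0; exact: sqr_ge0.
Qed.
Lemma Im_bound (z : C) : `|z| <= 1 -> `|complex.Im z| <= 1.
Proof.
rewrite normc_def -[1 : C]/((1 : R)%:C)%C lecR => h; apply: le_trans h.
case: z => a b /=; rewrite -sqrtr_sqr ler_sqrt ?lerDr ?sqr_ge0 //; apply: addr_ge0; exact: sqr_ge0.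
Qed.


Lemma compact_Kset : compact Kset.
Proof.
have hB : compact [set v : 'rV[R]_Nd | forall k, `[-1, 1] (v ord0 k)].
  exact: (@rV_compact R Nd (fun _ => `[(-1 : R), 1]) (fun _ => @segment_compact R _ _)).
have hsub : Kset `<=` [set v : 'rV[R]_Nd | forall k, `[-1, 1] (v ord0 k)].
  move=> g hg k.
  case ek: (enum_val k) => [[[l i] j] b].
  have -> : k = enum_rank (l, i, j, b) by rewrite -ek enum_valK.
  have hb := povm_entry_bound l i j hg.
  rewrite /= in_itv /= -ler_norml.
  case: b ek => _.
    by have := Im_bound hb; rewrite mxE.
  by have := Re_bound hb; rewrite mxE.
exact: (subclosed_compact closed_Kset hB hsub).
Qed.


Local Notation Q4 := (X * A * 'I_n * 'I_n)%type.
Definition ent (D : X -> A -> 'M[C]_n) (k : Q4) : C := D k.1.1.1 k.1.1.2 k.1.2 k.2.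
Definition ipR (D E : X -> A -> 'M[C]_n) : R :=
  \sum_k (complex.Re (ent D k) * complex.Re (ent E k) +
          complex.Im (ent D k) * complex.Im (ent E k)).
Definition tsub (D E : X -> A -> 'M[C]_n) : X -> A -> 'M[C]_n := fun x a => D x a - E x a.

Lemma ReB (x y : C) : complex.Re (x - y) = complex.Re x - complex.Re y.
Proof. by case: x; case: y. Qed.
Lemma ImB (x y : C) : complex.Im (x - y) = complex.Im x - complex.Im y.
Proof. by case: x; case: y. Qed.

Lemma Lmap_lin a (G H : Lam -> 'M[C]_n) x b :
  Lmap (fun l => RtoC a *: G l + H l) x b = RtoC a *: Lmap G x b + Lmap H x b.
Proof. by rewrite /Lmap big_split /= scaler_sumr. Qed.

Lemma Lmap_Z (c : C) (G : Lam -> 'M[C]_n) x b :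
  Lmap (fun l => c *: G l) x b = c *: Lmap G x b.
Proof. by rewrite /Lmap scaler_sumr. Qed.

Lemma decodeZ t g l : decode (t *: g) l = RtoC t *: decode g l.
Proof.
have := decode_lin t g 0 l; rewrite addr0 => ->.
have -> : decode 0 l = 0 by apply/matrixP => i j; rewrite !mxE.
by rewrite addr0.
Qed.

Lemma povm_convex (G1 G2 : Lam -> 'M[C]_n) t : 0 <= t <= 1 ->
  is_POVM G1 -> is_POVM G2 ->
  is_POVM (fun l => RtoC (1 - t) *: G1 l + RtoC t *: G2 l).
Proof.
move=> /andP[t0 t1] [h11 h12] [h21 h22]; split.
  move=> l; apply: psdD; apply: psdZ => //; rewrite RtoC_ge0 //.
  by rewrite subr_ge0.
by rewrite big_split /= -!scaler_sumr h12 h22 -scalerDl -RtoCD subrK RtoC1 scale1r.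
Qed.

Lemma quad_arg (B Q : R) : 0 <= Q ->
  (forall t, 0 < t -> t <= 1 -> 0 <= t * t * Q - 2 * t * B) -> B <= 0.
Proof.
move=> hQ h; rewrite leNgt; apply/negP => hB.
have [Q0|Qp] := eqVneq Q 0.
  by have := h 1 ltr01 (lexx _); rewrite Q0; lra.
have Qpos : 0 < Q by rewrite lt_def Qp hQ.
pose t := Num.min 1 (B / Q).
have t0 : 0 < t by rewrite lt_min ltr01 divr_gt0.
have t1 : t <= 1 by rewrite ge_min lexx.
have tQ : t * Q <= B by rewrite -ler_pdivlMr // ge_min lexx orbT.
have h1 : t * Q - 2 * B < 0 by lra.
have := h t t0 t1.
have -> : t * t * Q - 2 * t * B = t * (t * Q - 2 * B) by ring.
by rewrite leNgt pmulr_rlt0 ?h1.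
Qed.


Lemma ent_sub D E k : ent (tsub D E) k = ent D k - ent E k.
Proof. by rewrite /ent /tsub !mxE. Qed.

Lemma ipR_ge0 D : 0 <= ipR D D.
Proof. by apply: sumr_ge0 => k _; rewrite -!expr2; apply: addr_ge0; apply: sqr_ge0. Qed.

Lemma ipR_eq0 D : ipR D D = 0 -> D = (fun _ _ => 0).
Proof.
move=> h0.
have hk : forall k, (complex.Re (ent D k))^+2 + (complex.Im (ent D k))^+2 = 0.
  move=> k; apply: (@psumr_eq0P _ _ predT (fun k => (complex.Re (ent D k))^+2 + (complex.Im (ent D k))^+2)) => //.
    by move=> k' _; apply: addr_ge0; apply: sqr_ge0.
have e : forall k, ent D k = 0.
  move=> k; have /eqP := hk k.
  rewrite paddr_eq0 ?sqr_ge0 // !sqrf_eq0 => /andP[/eqP hr /eqP hi].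
  by apply/complex_eqP.
apply/funext => x; apply/funext => a; apply/matrixP => i j.
by have := e (x, a, i, j); rewrite /ent /= mxE.
Qed.

Lemma cont_add (f h : 'rV[R]_Nd -> R) : continuous f -> continuous h ->
  continuous (fun g => f g + h g).
Proof. by move=> hf hh x; exact: (@continuousD _ _ _ f h x (hf x) (hh x)). Qed.

Lemma cont_affsq (f : 'rV[R]_Nd -> R) c : continuous f ->
  continuous (fun g => (c - f g) * (c - f g)).
Proof.
move=> hf x.
have h1 : {for x, continuous (fun g => c - f g)}.
  by apply: continuousB; [exact: cst_continuous | exact: hf].
exact: (@continuousM _ _ (fun g => c - f g) (fun g => c - f g) x h1 h1).
Qed.


Definition phi (M : X -> A -> 'M[C]_n) (g : 'rV[R]_Nd) : R :=
  ipR (tsub M (Lmap (decode g))) (tsub M (Lmap (decode g))).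

Lemma phi_cont M : continuous (phi M).
Proof.
have hl : forall k, continuous (fun g => complex.Re (ent (Lmap (decode g)) k)) /\
                    continuous (fun g => complex.Im (ent (Lmap (decode g)) k)).
  move=> k; apply: (@dec_cont (fun G => ent (Lmap G) k)) => a G H.
  by rewrite /ent Lmap_lin !mxE.
have -> : phi M = fun g => \sum_k
   ((complex.Re (ent M k) - complex.Re (ent (Lmap (decode g)) k)) *
    (complex.Re (ent M k) - complex.Re (ent (Lmap (decode g)) k)) +
    (complex.Im (ent M k) - complex.Im (ent (Lmap (decode g)) k)) *
    (complex.Im (ent M k) - complex.Im (ent (Lmap (decode g)) k))).
  by apply/funext => g; rewrite /phi /ipR; apply: eq_bigr => k _; rewrite ent_sub ReB ImB.
apply: cont_sum => k; apply: cont_add.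
  by apply: cont_affsq; case: (hl k).
by apply: cont_affsq; case: (hl k).
Qed.


Lemma separation (M : X -> A -> 'M[C]_n) : ~ simple_PMD M ->
  (exists G0 : Lam -> 'M[C]_n, is_POVM G0) ->
  exists Y, simple_PMD Y /\ 0 < ipR (tsub M Y) (tsub M Y) /\
    forall F, simple_PMD F -> ipR (tsub M Y) (tsub F Y) <= 0.
Proof.
move=> hns [G0 hG0].
have Kne : Kset !=set0 by exists (encode G0); rewrite /Kset /= decodeK.
have [gs gsK gsmin] := compact_EVT_min Kne compact_Kset (@continuous_subspaceT _ _ Kset _ (@phi_cont M)).
rewrite inE in gsK.
set Y := Lmap (decode gs).
exists Y; split; first exact: joint_simple.
split.
  rewrite lt_def ipR_ge0 andbT; apply/eqP => h0.
  apply: hns; have := ipR_eq0 h0 => e.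
  have -> : M = Y.
    apply/funext => x; apply/funext => a.
    have := congr1 (fun f => f x a) e; rewrite /tsub /= => /eqP.
    by rewrite subr_eq0 => /eqP.
  exact: joint_simple.
move=> F hF; have [G [hG eF]] := simple_joint hF; rewrite eF.
set E := tsub (Lmap G) Y; set D := tsub M Y.
apply: (@quad_arg _ (ipR E E)); first exact: ipR_ge0.
move=> t t0 t1.
pose gt := (1 - t) *: gs + t *: encode G.
have edec : decode gt = fun l => RtoC (1 - t) *: decode gs l + RtoC t *: G l.
  by rewrite /gt decode_linF; apply/funext => l; rewrite decodeZ decodeK.
have gtK : Kset gt.
  rewrite /Kset /= edec; apply: povm_convex => //.
  by rewrite (ltW t0) t1.
have := gsmin gt (mem_set gtK).
have eent : forall k, ent (tsub M (Lmap (decode gt))) k = ent D k - RtoC t * ent E k.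
  move=> k; rewrite /ent /tsub edec Lmap_lin Lmap_Z /D /E /Y /tsub !mxE.
  have -> : RtoC (1 - t) = 1 - RtoC t by rewrite /RtoC rmorphB.
  by ring.
have ephi : phi M gt = phi M gs - 2 * t * ipR D E + t * t * ipR E E.
  rewrite /phi -/Y -/D /ipR.
  transitivity (\sum_k ((complex.Re (ent D k) * complex.Re (ent D k) +
                         complex.Im (ent D k) * complex.Im (ent D k)) -
       2 * t * (complex.Re (ent D k) * complex.Re (ent E k) +
                complex.Im (ent D k) * complex.Im (ent E k)) +
       t * t * (complex.Re (ent E k) * complex.Re (ent E k) +
                complex.Im (ent E k) * complex.Im (ent E k)))).
    by apply: eq_bigr => k _; rewrite eent ReB ImB ReRZ ImRZ; ring.
  by rewrite big_split /= sumrB -!mulr_sumr.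
rewrite ephi => h.
have : 0 <= t * t * ipR E E - 2 * t * ipR D E by lra.
by [].
Qed.

End P4.


Section P5.
Variable R : realType.
Local Notation C := (R[i]).
Variables (n : nat) (W Z : finType).

Definition val (F rho : W -> Z -> 'M[C]_n) : C := \sum_w \sum_z \tr (F w z *m rho w z).

Lemma PG_le n' (V Cc : finType) (N : V -> Cc -> 'M[C]_n') (rho : W -> Z -> 'M[C]_n) (b : R) :
  simple_PMD N -> 0 <= b ->
  (forall F, simple_PMD F -> val F rho <= RtoC b) -> P_guess N rho <= b.
Proof.
move=> hN hb hF; rewrite /P_guess.
set S := (fun t : R => _).
have [ne|e] := pselect (S !=set0); last first.
  have -> : S = set0.
    by rewrite predeqE => t; split => // ht; apply: e; exists t.
  by rewrite sup0.
apply: ge_sup => // t [Rr [I [mu [E [p [q [hmu [hE [hp [hq ht]]]]]]]]]].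
have [F [hFs eF]] := strategy_simple rho hN hmu hE hp hq.
by rewrite -RtoC_le ht eF; apply: hF.
Qed.

Lemma val_le1 (F rho : W -> Z -> 'M[C]_n) : is_PMD F -> is_game rho -> val F rho <= RtoC 1.
Proof. by move=> hF hr; case: (val_bounds hF hr). Qed.

Lemma val_ge0 (F rho : W -> Z -> 'M[C]_n) : is_PMD F -> is_game rho -> 0 <= val F rho.
Proof. by move=> hF hr; case: (val_bounds hF hr). Qed.

Lemma PG_ge n' (V Cc : finType) (N : V -> Cc -> 'M[C]_n') (rho : W -> Z -> 'M[C]_n) t :
  simple_PMD N -> is_game rho ->
  (exists (Rr I : finType) (mu : Rr -> R)
           (E : Rr -> I -> 'M[C]_n -> 'M[C]_n')
           (p : (W * I * Rr)%type -> V -> R)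
           (q : (Cc * W * I * Rr)%type -> Z -> R),
      distr mu /\ (forall r, is_instrument (E r)) /\
      cond_distr p /\ cond_distr q /\
      RtoC t = guess_value N rho mu E p q) ->
  t <= P_guess N rho.
Proof.
move=> hN hr ht; apply: sup_upper_bound => //; split; first by exists t.
exists 1 => t' [Rr [I [mu [E [p [q [hmu [hE [hp [hq ht']]]]]]]]]].
have [F [hFs eF]] := strategy_simple rho hN hmu hE hp hq.
by rewrite -RtoC_le ht' eF; apply: val_le1 => //; case: hFs.
Qed.

Lemma PGS_le (rho : W -> Z -> 'M[C]_n) (b : R) : 0 <= b ->
  (forall F, simple_PMD F -> val F rho <= RtoC b) -> P_guess_simple rho <= b.
Proof.
move=> hb hF; rewrite /P_guess_simple.
set S := (fun t : R => _).
have [ne|e] := pselect (S !=set0); last first.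
  have -> : S = set0.
    by rewrite predeqE => t; split => // ht; apply: e; exists t.
  by rewrite sup0.
apply: ge_sup => // t [n' [V [Cc [N [hN ->]]]]].
exact: PG_le.
Qed.

Lemma PGS_ge n' (V Cc : finType) (N : V -> Cc -> 'M[C]_n') (rho : W -> Z -> 'M[C]_n) :
  simple_PMD N -> is_game rho -> P_guess N rho <= P_guess_simple rho.
Proof.
move=> hN hr; rewrite /P_guess_simple.
set S := (fun t : R => _).
have hS : S (P_guess N rho) by exists n', V, Cc, N.
have hs : has_sup S.
  split; first by exists (P_guess N rho).
  exists 1 => t [n'' [V' [Cc' [N' [hN' ->]]]]].
  apply: PG_le; [exact: hN' | exact: ler01 | ].
  by move=> F hF; apply: val_le1 => //; case: hF.
exact: (sup_upper_bound hs hS).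
Qed.

Lemma easy_dir (M rho : W -> Z -> 'M[C]_n) : simple_PMD M -> is_game rho ->
  ~ (RtoC (P_guess_simple rho) < val M rho).
Proof.
move=> hM hr hlt.
set v := val M rho in hlt.
have ev : v = RtoC (complex.Re v).
  move: hlt; rewrite ltcE => /andP[/eqP hi _].
  by case: v hi => a b /= ->.
have [mu [E [p [q [hmu [hE [hp [hq hg]]]]]]]] := trivial_strategy M rho.
have h1 : complex.Re v <= P_guess M rho.
  apply: PG_ge => //.
  by exists 'I_1, 'I_1, mu, E, p, q; do ! split => //; rewrite hg -ev.
have h2 := PGS_ge hM hr.
move: hlt; rewrite ev RtoC_lt => hlt.
by have := le_trans h1 h2; rewrite leNgt hlt.
Qed.

End P5.


Section P6.
Variable R : realType.
Local Notation C := (R[i]).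

Lemma qf_adj m (D : 'M[C]_m) u w : (qf D u w)^* = qf (adj D) w u.
Proof.
rewrite /qf -adjE; congr (_ 0 0).
by rewrite !adjM adjK mulmxA.
Qed.

Lemma mul_le_sqrs (a b : C) : 0 <= a -> 0 <= b -> a * b <= a ^+ 2 + b ^+ 2.
Proof.
move=> ha hb; case/orP: (ger_leVge ha hb) => h.
  apply: (@le_trans _ _ (b ^+ 2)); first by rewrite expr2 ler_wpM2r.
  by rewrite lerDr exprn_ge0.
apply: (@le_trans _ _ (a ^+ 2)); first by rewrite expr2 ler_wpM2l.
by rewrite lerDl exprn_ge0.
Qed.

Lemma herm_shift m (D : 'M[C]_m) (c : C) : adj D = D ->
  (\sum_i \sum_j `|D i j|) *+ 2 <= c -> psd (D + c *: 1%:M).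
Proof.
move=> hD hc v; rewrite -/(qf _ _ _) qfAD qfAZ.
set s := qf 1%:M v v.
have es : s = \sum_k `|v k 0| ^+ 2.
  rewrite /s qf_sum; apply: eq_bigr => i _.
  rewrite (eq_bigr (fun j => (j == i)%:R * ((v i 0)^* * v j 0))); last first.
    by move=> j _; rewrite mxE eq_sym; case: (j == i); rewrite ?mulr1n ?mulr0n ?mulr1 ?mulr0 ?mul1r ?mul0r.
  by rewrite sum_delta normCKC.
have hs_i : forall i, `|v i 0| ^+ 2 <= s.
  by move=> i; rewrite es (bigD1 i) //= lerDl; apply: sumr_ge0 => k _; apply: exprn_ge0.
have hreal : qf D v v \is Num.real by rewrite CrealE qf_adj hD.
have hb : `|qf D v v| <= c * s.
  rewrite qf_sum.
  apply: (le_trans (ler_norm_sum _ _ _)).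
  apply: (@le_trans _ _ (\sum_i \sum_j `|D i j| * (s *+ 2))).
    apply: ler_sum => i _; apply: (le_trans (ler_norm_sum _ _ _)).
    apply: ler_sum => j _; rewrite !normrM norm_conjC.
    rewrite (_ : `|v i 0| * `|D i j| * `|v j 0| = `|D i j| * (`|v i 0| * `|v j 0|)); last by ring.
    rewrite ler_wpM2l //.
    apply: (le_trans (mul_le_sqrs (normr_ge0 _) (normr_ge0 _))).
    by rewrite mulr2n lerD.
  rewrite (eq_bigr (fun i => (\sum_j `|D i j|) * (s *+ 2))); last first.
    by move=> i _; rewrite mulr_suml.
  rewrite -mulr_suml mulrnAr -mulrnAl ler_wpM2r //.
  by rewrite es; apply: sumr_ge0 => k _; apply: exprn_ge0.
move: hb; rewrite real_ler_norml // => /andP[h1 _].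
by move: h1; rewrite -(lerD2r (c * s)) addNr.
Qed.


Lemma Re_mul_conj (f d : C) :
  complex.Re (f * d^*) = complex.Re f * complex.Re d + complex.Im f * complex.Im d.
Proof. by case: f => a b; case: d => c e; simpc. Qed.

Lemma tr_re m (F D : 'M[C]_m) : adj D = D ->
  complex.Re (\tr (F *m D)) =
  \sum_i \sum_j (complex.Re (D i j) * complex.Re (F i j) + complex.Im (D i j) * complex.Im (F i j)).
Proof.
move=> hD; rewrite /mxtrace Re_sum; apply: eq_bigr => i _.
rewrite mxE Re_sum; apply: eq_bigr => j _.
have -> : D j i = (D i j)^* by rewrite -[in LHS]hD adjE.
by rewrite Re_mul_conj; ring.
Qed.

Lemma sum_quadR (A1 A2 A3 A4 : finType) (G : (A1 * A2 * A3 * A4)%type -> R) :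
  \sum_t G t = \sum_a \sum_b \sum_c \sum_d G (a, b, c, d).
Proof.
transitivity (\sum_(t : (A1 * A2 * A3) * A4) G (t.1.1.1, t.1.1.2, t.1.2, t.2)).
  by apply: eq_bigr => [[[[a b] c] d]] _.
rewrite -(pair_bigA _ (fun abc d => G (abc.1.1, abc.1.2, abc.2, d))).
rewrite -(pair_bigA _ (fun ab c => \sum_d G (ab.1, ab.2, c, d))).
by rewrite -(pair_bigA _ (fun a b => \sum_c \sum_d G (a, b, c, d))).
Qed.

End P6.

Section P7.
Variable R : realType.
Local Notation C := (R[i]).
Variables (n : nat) (X A : finType).

Lemma ipR_tr (D F : X -> A -> 'M[C]_n) : (forall x a, adj (D x a) = D x a) ->
  complex.Re (\sum_x \sum_a \tr (F x a *m D x a)) = ipR D F.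
Proof.
move=> hD; rewrite /ipR sum_quadR Re_sum; apply: eq_bigr => x _.
rewrite Re_sum; apply: eq_bigr => a _.
by rewrite tr_re.
Qed.

Lemma ipR_sub (D F Y : X -> A -> 'M[C]_n) : ipR D (tsub F Y) = ipR D F - ipR D Y.
Proof.
rewrite /ipR -sumrB; apply: eq_bigr => k _.
by rewrite ent_sub ReB ImB; ring.
Qed.

End P7.


Section P8.
Variable R : realType.
Local Notation C := (R[i]).

Lemma adjB m k (P Q : 'M[C]_(m, k)) : adj (P - Q) = adj P - adj Q.
Proof. by apply/matrixP => i j; rewrite !mxE conjB. Qed.

Lemma real_RtoC (z : C) : z \is Num.real -> z = RtoC (complex.Re z).
Proof. by move=> hz; rewrite /RtoC RRe_real. Qed.

Lemma le_sum2 (X A : finType) (F : X -> A -> C) x a :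
  (forall x a, 0 <= F x a) -> F x a <= \sum_x' \sum_a' F x' a'.
Proof.
move=> hF; rewrite (bigD1 x) //= (bigD1 a) //= -addrA lerDl.
apply: addr_ge0; apply: sumr_ge0 => ? _ //; apply: sumr_ge0 => ? _; exact: hF.
Qed.

Lemma simple_dim0 (X A : finType) (M : X -> A -> 'M[C]_0) : simple_PMD M.
Proof.
apply: (@simple_of R 0 X A 'I_0 (fun _ => 0) (fun _ _ => 0)).
- by split; [case | apply/matrixP => [[]]].
- by move=> [[]].
- by move=> x a; apply/matrixP => [[]].
Qed.

Lemma simple_X0 n (X A : finType) (M : X -> A -> 'M[C]_n) : (X -> False) -> simple_PMD M.
Proof.
move=> hX; apply: (@simple_of R n X A 'I_1 (fun _ => 1%:M) (fun _ _ => 0)).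
- by split; [move=> _; exact: psd1 | rewrite big_ord1].
- by move=> [_ x]; case: (hX x).
- by move=> x; case: (hX x).
Qed.


Lemma hard_dir n (X A : finType) (M : X -> A -> 'M[C]_n) :
  is_PMD M -> ~ simple_PMD M ->
  exists rho : X -> A -> 'M[C]_n, is_game rho /\
    RtoC (P_guess_simple rho) < \sum_x \sum_a \tr (M x a *m rho x a).
Proof.
case: n M => [|n] M hM hns; first by case: hns; exact: simple_dim0.
case: (pickP (@predT X)) => [x0 _|hX]; last first.
  by case: hns; apply: simple_X0 => x; have := hX x.
case: (pickP (@predT A)) => [a0 _|hA]; last first.
  exfalso; have := proj2 hM x0; rewrite big_pred0 // => /matrixP /(_ 0 0).
  by rewrite !mxE eqxx /= => /eqP; rewrite eq_sym oner_eq0.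
pose l0 : {ffun X -> A} := [ffun=> a0].
pose G0 (l : {ffun X -> A}) : 'M[C]_n.+1 := if l == l0 then 1%:M else 0.
have hG0 : is_POVM G0.
  split; first by move=> l; rewrite /G0; case: (l == l0); [exact: psd1 | exact: psd0].
  rewrite (bigD1 l0) //= /G0 eqxx big1 ?addr0 // => l /negbTE ->; done.
have [Y [hY [hd hsep]]] := separation hns (ex_intro _ G0 hG0).
set D := tsub M Y in hd hsep.
have hDh : forall x a, adj (D x a) = D x a.
  by move=> x a; rewrite /D /tsub adjB (psd_herm (proj1 hM x a)) (psd_herm (proj1 (proj1 hY) x a)).
pose c0 := \sum_x \sum_a \sum_i \sum_j `|D x a i j|.
have c0ge : forall x a, \sum_i \sum_j `|D x a i j| <= c0.
  move=> x a; apply: (le_sum2 (F := fun x a => \sum_i \sum_j `|D x a i j|)) => x' a'.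
  by apply: sumr_ge0 => i _; apply: sumr_ge0 => j _.
have c0_ge0 : 0 <= c0 by apply: le_trans (c0ge x0 a0); apply: sumr_ge0 => i _; apply: sumr_ge0 => j _.
pose cc := c0 *+ 2 + 1.
pose rho0 x a := D x a + cc *: 1%:M.
have hrho0 : forall x a, psd (rho0 x a).
  move=> x a; rewrite /rho0 /cc scalerDl scale1r addrA; apply: psdD; last exact: psd1.
  by apply: herm_shift => //; rewrite lerMn2r c0ge orbT.
pose Zc := \sum_x \sum_a \tr (rho0 x a).
have Zpos : 0 < Zc.
  apply: (@lt_le_trans _ _ (\tr (rho0 x0 a0))); last first.
    by apply: (le_sum2 (F := fun x a => \tr (rho0 x a))) => x a; apply: tr_psd_ge0.
  rewrite /rho0 /cc scalerDl scale1r addrA mxtraceD mxtrace1.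
  apply: (@lt_le_trans _ _ (n.+1)%:R); first by rewrite ltr0n.
  rewrite lerDr; apply: tr_psd_ge0; apply: herm_shift => //.
  by rewrite lerMn2r c0ge orbT.
have Zn0 : Zc != 0 by rewrite gt_eqF.
pose rho x a := Zc^-1 *: rho0 x a.
have hgame : is_game rho.
  split; first by move=> x a; apply: psdZ => //; rewrite invr_ge0 ltW.
  rewrite /rho (eq_bigr (fun x => Zc^-1 * \sum_a \tr (rho0 x a))); last first.
    by move=> x _; rewrite mulr_sumr; apply: eq_bigr => a _; rewrite mxtraceZ.
  by rewrite -mulr_sumr mulVf.
exists rho; split => //.
pose K0 := cc * \sum_(x : X) ((n.+1)%:R : C).
have cc_ge0 : 0 <= cc by rewrite /cc addr_ge0 ?mulrn_wge0 ?ler01.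
have K0real : K0 \is Num.real.
  by apply: ger0_real; apply: mulr_ge0 => //; apply: sumr_ge0 => x _; apply: ler0n.
have Zreal : Zc \is Num.real by apply: ger0_real; apply: ltW.
set zr := complex.Re Zc; have hz : Zc = RtoC zr := real_RtoC Zreal.
set k0 := complex.Re K0; have hk : K0 = RtoC k0 := real_RtoC K0real.
have zr_pos : 0 < zr by rewrite -RtoC_lt -hz.
have vform : forall F, is_PMD F ->
    val F rho = Zc^-1 * (\sum_x \sum_a \tr (F x a *m D x a) + K0).
  move=> F [hF1 hF2]; rewrite /val /K0.
  rewrite (eq_bigr (fun x => Zc^-1 * (\sum_a \tr (F x a *m D x a) + cc * (n.+1)%:R)));
    last first.
    move=> x _.
    rewrite (eq_bigr (fun a => Zc^-1 * (\tr (F x a *m D x a) + cc * \tr (F x a))));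
      last first.
      move=> a _; rewrite /rho /rho0 -scalemxAr mxtraceZ mulmxDr mxtraceD.
      by rewrite -scalemxAr mxtraceZ mulmx1.
    by rewrite -mulr_sumr big_split /= -mulr_sumr -(tr_sum (F x)) hF2 mxtrace1.
  by rewrite -mulr_sumr big_split /= -mulr_sumr.
have Tform : forall F, is_PMD F ->
    \sum_x \sum_a \tr (F x a *m D x a) = RtoC (ipR D F).
  move=> F hF; set T := \sum_x \sum_a _.
  have Treal : T \is Num.real.
    have e : T = Zc * val F rho - K0 by rewrite vform // mulrA mulfV // mul1r addrK.
    by rewrite e rpredB // rpredM // ger0_real // val_ge0.
  by rewrite (real_RtoC Treal) ipR_tr.
have vR : forall F, is_PMD F -> val F rho = RtoC (zr^-1 * (ipR D F + k0)).
  move=> F hF; rewrite vform // Tform // hz hk -RtoCD /RtoC -fmorphV -rmorphM //.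
have bnd : forall F, simple_PMD F -> ipR D F <= ipR D M - ipR D D.
  move=> F hF; have := hsep F hF; rewrite /D !ipR_sub; lra.
pose b := zr^-1 * (ipR D M - ipR D D + k0).
have hb : forall F, simple_PMD F -> val F rho <= RtoC b.
  move=> F hF; rewrite vR; last by case: hF.
  rewrite RtoC_le ler_pM2l ?invr_gt0 //; have := bnd F hF; lra.
have b0 : 0 <= b.
  rewrite -RtoC_le; apply: le_trans (hb Y hY); apply: val_ge0 => //; by case: hY.
have hP := PGS_le b0 hb.
apply: (@le_lt_trans _ _ (RtoC b)); first by rewrite RtoC_le.
rewrite -/(val M rho) vR // RtoC_lt ltr_pM2l ?invr_gt0 //; lra.
Qed.

End P8.

Local Close Scope classical_set_scope.

Theorem corollary1 (R : realType) (n : nat) (X A : finType)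
  (M : X -> A -> 'M[R[i]]_n) :
  is_PMD M ->
  (incompatible_PMD M <->
   exists rho : X -> A -> 'M[R[i]]_n,
     is_game rho /\
     RtoC (P_guess_simple rho) < \sum_x \sum_a \tr (M x a *m rho x a)).
Proof.
move=> hM; split.
  by move=> [_ hns]; exact: hard_dir.
move=> [rho [hr hlt]]; split => // hs.
exact: (easy_dir hs hr hlt).
Qed.
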